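(* For every $n \ge 1$, the $\mathbb{Z}$-discriminating complexity of $\mathbb{Z}^n$ is asymptotically equivalent to a polynomial of degree $n-1$, i.e. $C_{\mathbb{Z}^n}^{\mathbb{Z}} \approx (R \mapsto R^{n-1})$.
   Context: A group $G$ is fully residually $H$ if for every finite set $S \subseteq G-\{1\}$ there is a homomorphism $\phi: G \to H$ with $1 \notin \phi(S)$ ($\phi$ discriminates $S$). For finite generating sets $X$ of $G$ and $Y$ of $H$, the complexity of $\phi: G\to H$ is $|\phi|_X^Y := \max_{x \in X} |\phi(x)|_Y$. The $H$-discriminating complexity is $C_{G,X}^{H,Y}(R) := \min\{|\phi|_X^Y : \phi \text{ discriminates } B_R(G,X)-\{1\}\}$, $B_R(G,X)$ being the closed ball of radius $R$ about $1$ in the word metric. For $f,g:\mathbb{N}\to\mathbb{N}$, $f \preceq g$ means there is $K$ with $f(R) \le K g(KR)+K$ for all $R$, and $f\approx g$ means $f \preceq g$ and $g\preceq f$. The $\approx$-class of $C_{G,X}^{H,Y}$ is independent of $X,Y$ and is denoted $C_G^H$. *)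

(* Defs.v *)
From mathcomp Require Import all_boot all_order all_algebra.
Set Implicit Arguments. Unset Strict Implicit. Unset Printing Implicit Defensive.
Import Order.TTheory GRing.Theory Num.Theory.

(* Abelian groups are written additively as zmodTypes (Z^n and Z are abelian). *)
Local Open Scope ring_scope.

(* g lies in the closed ball of radius R about 0 in the word metric w.r.t. the
   finite generating set X: g is a product (sum) of at most R letters from X^{+-1}. *)
Definition in_ball (G : zmodType) (X : seq G) (R : nat) (g : G) : Prop :=
  exists s : seq G, (size s <= R)%N /\
    all (fun x => (x \in X) || (- x \in X)) s /\ g = \sum_(x <- s) x.

Definition is_hom (G H : zmodType) (phi : G -> H) : Prop :=
  forall x y, phi (x + y) = phi x + phi y.

Definition discriminates_ball (G H : zmodType) (X : seq G) (R : nat)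
  (phi : G -> H) : Prop :=
  forall g, in_ball X R g -> g != 0 -> phi g != 0.

Definition complexity_le (G H : zmodType) (X : seq G) (Y : seq H)
  (phi : G -> H) (c : nat) : Prop :=
  forall x, x \in X -> in_ball Y c (phi x).

Definition is_disc_complexity (G H : zmodType) (X : seq G) (Y : seq H)
  (C : nat -> nat) : Prop :=
  forall R : nat,
    (exists phi : G -> H, is_hom phi /\ discriminates_ball X R phi /\
                          complexity_le X Y phi (C R)) /\
    (forall (phi : G -> H) (c : nat), is_hom phi -> discriminates_ball X R phi ->
        complexity_le X Y phi c -> (C R <= c)%N).

Definition asym_le (f g : nat -> nat) : Prop :=
  exists K : nat, forall R : nat, (f R <= K * g (K * R) + K)%N.
Definition asym_eq (f g : nat -> nat) : Prop := asym_le f g /\ asym_le g f.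

(* Z^n as integer row vectors, with its standard basis; Z with generator 1. *)
Definition std_basis (n : nat) : seq 'rV[int]_n :=
  [seq delta_mx 0 i | i <- enum 'I_n].

(* Main.v *)
Require Import Defs.
From mathcomp Require Import all_boot all_order all_algebra zify.
From Stdlib Require Import ClassicalEpsilon.
Import Order.TTheory GRing.Theory Num.Theory.
Local Open Scope ring_scope.

Section Ball.
Variables (G : zmodType) (X : seq G).

Lemma ball0 r : in_ball X r 0.
Proof. by exists [::]; rewrite big_nil. Qed.

Lemma ballD r1 r2 g h : in_ball X r1 g -> in_ball X r2 h -> in_ball X (r1 + r2) (g + h).
Proof.
move=> [s1 [h1 [a1 ->]]] [s2 [h2 [a2 ->]]].
exists (s1 ++ s2); rewrite size_cat all_cat a1 a2 big_cat; split=> //.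
exact: leq_add.
Qed.

Lemma ballW r1 r2 g : (r1 <= r2)%N -> in_ball X r1 g -> in_ball X r2 g.
Proof. by move=> le [s [h1 h2]]; exists s; rewrite (leq_trans h1 le). Qed.

Lemma ball1 x : (x \in X) || (- x \in X) -> in_ball X 1 x.
Proof. by move=> hx; exists [:: x]; rewrite big_seq1 /= hx. Qed.

Lemma ballnat x k : (x \in X) || (- x \in X) -> in_ball X k (x *+ k).
Proof.
move=> hx; elim: k => [|k IH]; first by rewrite mulr0n; apply: ball0.
by rewrite mulrS -add1n; apply: ballD => //; apply: ball1.
Qed.

Lemma ballint x z : x \in X -> in_ball X (absz z) (x *~ z).
Proof.
move=> hx; case: z => k.
  by apply: ballnat; rewrite hx.
rewrite NegzE mulrNz -mulNrn; apply: ballnat; by rewrite opprK hx orbT.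
Qed.

Lemma ball_sum (I : Type) (r : seq I) (P : pred I) (rad : I -> nat) (F : I -> G) :
  (forall i, P i -> in_ball X (rad i) (F i)) ->
  in_ball X (\sum_(i <- r | P i) rad i)%N (\sum_(i <- r | P i) F i).
Proof.
move=> h; apply: (big_rec2 (fun a b => in_ball X a b)); first exact: ball0.
by move=> i y1 y2 Pi hy; apply: ballD => //; apply: h.
Qed.

Lemma ball_hom (phi : G -> int) r g c :
  is_hom phi -> (forall x, x \in X -> (absz (phi x) <= c)%N) ->
  in_ball X r g -> (absz (phi g) <= r * c)%N.
Proof.
move=> hom hc [s [hs [ha ->]]].
have phi0 : phi 0 = 0.
  have := hom 0 0; rewrite addr0; lia.
have phiN y : phi (- y) = - phi y.
  have := hom y (- y); rewrite addrN phi0; lia.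
suff: (absz (phi (\sum_(x <- s) x)%R) <= size s * c)%N.
  by move=> h; apply: (leq_trans h); rewrite leq_mul2r hs orbT.
elim: s {hs} ha => [|x s IH] /=; first by rewrite big_nil phi0.
move=> /andP [hx ha]; rewrite big_cons hom mulSn.
have hx' : (absz (phi x) <= c)%N.
  case/orP: hx => hx; first exact: hc.
  by have := hc _ hx; rewrite phiN abszN.
have := IH ha; move: hx'; set a := phi x; set b := phi _; lia.
Qed.
End Ball.

Lemma vec_decomp n (g : 'rV[int]_n) : g = \sum_(i < n) delta_mx 0 i *~ g 0 i.
Proof.
apply/matrixP => i j; rewrite summxE (bigD1 j) //= big1 ?addr0.
  by rewrite -scaler_int intz ord1 !mxE !eqxx mulr1.
move=> k hk; rewrite -scaler_int intz !mxE (eq_sym j k) (negbTE hk) andbF mulr0 //.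
Qed.

Lemma in_std n i : delta_mx 0 i \in std_basis n.
Proof. by apply: map_f; rewrite mem_enum. Qed.

Lemma ball_vec n m (g : 'rV[int]_n) :
  (forall i, (absz (g 0%R i) <= m)%N) -> in_ball (std_basis n) (n * m) g.
Proof.
move=> hm; rewrite [g]vec_decomp.
apply: (@ballW _ _ (\sum_(i < n) absz (g 0%R i))%N).
  apply: (@leq_trans (\sum_(i < n) m)%N); first by apply: leq_sum => i _; apply: hm.
  by rewrite sum_nat_const card_ord.
by apply: ball_sum => i _; apply: ballint; apply: in_std.
Qed.

Lemma entry_bound n r (g : 'rV[int]_n) i :
  in_ball (std_basis n) r g -> (absz (g 0%R i) <= r)%N.
Proof.
move=> hr; rewrite -[r]muln1.
apply: (@ball_hom _ _ (fun h : 'rV[int]_n => h 0 i)) hr.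
  by move=> x y; rewrite mxE.
move=> x /mapP [j _ ->]; rewrite mxE; by case: (_ && _).
Qed.

Lemma int_ball_le r (z : int) : in_ball [:: 1] r z -> (absz z <= r)%N.
Proof.
move=> hr; rewrite -[r]muln1; apply: (@ball_hom _ _ id) hr => //.
by move=> x; rewrite inE => /eqP ->.
Qed.

Lemma int_ball c (z : int) : (absz z <= c)%N -> in_ball [:: 1] c z.
Proof.
move=> hc; apply: ballW hc _.
have h := @ballint int [:: 1] 1 z (mem_head _ _).
  by rewrite intz in h.
Qed.

Lemma base_uniq (B : nat) k : (1 < B)%N -> forall f : nat -> int,
  (forall i, (absz (f i) < B)%N) ->
  \sum_(i < k) f i * (B%:Z) ^+ i = 0 -> forall i, (i < k)%N -> f i = 0.
Proof.
move=> hB; elim: k => [|k IH] f hf hs i hi //.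
move: hs; rewrite big_ord_recl /= expr0 mulr1.
set S := \sum_(i < k) _.
have eS : S = B%:Z * \sum_(j < k) f j.+1 * (B%:Z) ^+ j.
  rewrite mulr_sumr; apply: eq_bigr => j _.
  by rewrite /bump /= add1n exprS mulrCA.
rewrite eS; set T := \sum_(j < k) _ => h0.
have hT : T = 0.
  have := hf 0%N; move: h0; rewrite -/T; clear -hB; nia.
move: h0; rewrite hT mulr0 addr0 => f0.
case: i hi => [|i] hi; first exact: f0.
exact: (IH (fun j => f j.+1)).
Qed.

Lemma expn_mono m p e : (m <= p)%N -> (m ^ e <= p ^ e)%N.
Proof. by move=> h; elim: e => // e IH; rewrite !expnS leq_mul. Qed.

Lemma hom0 (G : zmodType) (phi : G -> int) : is_hom phi -> phi 0 = 0.
Proof. by move=> hom; have := hom 0 0; rewrite addr0; lia. Qed.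

Lemma homB (G : zmodType) (phi : G -> int) a b : is_hom phi -> phi (a - b) = phi a - phi b.
Proof.
move=> hom; have := hom (a - b) b; rewrite subrK => ->; lia.
Qed.

Definition vec {n m} (v : {ffun 'I_n -> 'I_m.+1}) : 'rV[int]_n := \row_i ((v i : nat)%:Z).

Lemma pigeon n m c (phi : 'rV[int]_n -> int) :
  is_hom phi -> discriminates_ball (std_basis n) (n * m) phi ->
  complexity_le (std_basis n) [:: 1] phi c ->
  ((m.+1) ^ n <= (2 * n * m * c).+1)%N.
Proof.
move=> hom hd hc.
have hc' : forall x, x \in std_basis n -> (absz (phi x) <= c)%N.
  by move=> x hx; apply: int_ball_le; apply: hc.
have bnd : forall v : {ffun 'I_n -> 'I_m.+1}, (absz (phi (vec v)) <= n * m * c)%N.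
  move=> v; apply: (@ball_hom _ _ phi (n * m)%N (vec v) c hom hc'); apply: ball_vec => i.
  by rewrite mxE /= -ltnS ltn_ord.
pose f (v : {ffun 'I_n -> 'I_m.+1}) : 'I_(2 * n * m * c).+1 :=
  inord (absz (phi (vec v) + (n * m * c)%:Z)).
have finj : injective f.
  move=> v w /(congr1 (@nat_of_ord _)); rewrite /f !inordK; last first.
  - by have := bnd v; set a := phi _; lia.
  - by have := bnd w; set a := phi _; lia.
  move=> e.
  have e2 : phi (vec v) = phi (vec w).
    move: e (bnd v) (bnd w); set a := phi (vec v); set b := phi (vec w); lia.
  have e3 : vec v - vec w = 0.
    apply/eqP; apply: contraT => hne.
    have := hd _ _ hne; rewrite homB // e2 subrr eqxx; apply.
    apply: ball_vec => i; rewrite !mxE /=.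
    have := ltn_ord (v i); have := ltn_ord (w i); lia.
  apply/ffunP => i; apply: val_inj.
  have := congr1 (fun M : 'rV[int]_n => M 0 i) (subr0_eq e3).
  by rewrite !mxE => -[].
have := leq_card f finj; by rewrite card_ffun !card_ord.
Qed.

Lemma upper_witness n R : (1 <= n)%N -> exists phi : 'rV[int]_n -> int,
  is_hom phi /\ discriminates_ball (std_basis n) R phi /\
  complexity_le (std_basis n) [:: 1] phi ((R.+1) ^ (n - 1))%N.
Proof.
move=> hn.
pose B : int := (R.+1)%:Z.
exists (fun g => \sum_(i < n) g 0 i * B ^+ i); split; [|split].
- by move=> x y; rewrite -big_split; apply: eq_bigr => i _; rewrite mxE mulrDl.
- move=> g hg; apply: contraNN => /eqP h0.
  have he := fun i => @entry_bound n R g i hg.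
  apply/eqP/matrixP => i j; rewrite ord1 mxE.
  move: h0; rewrite /B; clear B; case: R hg he => [|R] hg he h0.
    by have := he j; case: (g 0 j) => // -[].
  pose f (k : nat) : int := if insub k is Some i then g 0 i else 0.
  have hf : forall k, (absz (f k) < R.+2)%N.
    by move=> k; rewrite /f; case: insub => [i0|] //; rewrite ltnS.
  have hs : \sum_(i < n) f i * (R.+2)%:Z ^+ i = 0.
    by rewrite -[X in _ = X]h0; apply: eq_bigr => i0 _; rewrite /f valK.
  have := @base_uniq R.+2 n (erefl _) f hf hs j (ltn_ord j).
  by rewrite /f valK.
- move=> x /mapP [j _ ->]; apply: int_ball.
  rewrite (bigD1 j) //= big1 ?addr0.
    rewrite mxE !eqxx mul1r /B abszX absz_nat.
    by apply: leq_pexp2l => //; have := ltn_ord j; lia.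
  by move=> k hk; rewrite mxE (negbTE hk) andbF mul0r.
Qed.

Definition Qd n R c := exists phi : 'rV[int]_n -> int,
  is_hom phi /\ discriminates_ball (std_basis n) R phi /\
  complexity_le (std_basis n) [:: 1] phi c.

Definition Pb n R c : bool :=
  if excluded_middle_informative (Qd n R c) then true else false.

Lemma PbP n R c : Pb n R c <-> Qd n R c.
Proof. by rewrite /Pb; case: excluded_middle_informative. Qed.

Theorem theoremB (n : nat) (hn : (1 <= n)%N) :
  exists C : nat -> nat,
    is_disc_complexity (std_basis n) [:: (1 : int)] C /\
    asym_eq C (fun R => (R ^ (n - 1))%N).
Proof.
have exP : forall R, exists c, Pb n R c.
  by move=> R; exists ((R.+1) ^ (n - 1))%N; apply/PbP; apply: upper_witness.
pose C R := ex_minn (exP R).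
have CP : forall R, Qd n R (C R).
  by move=> R; rewrite /C; case: ex_minnP => m /PbP.
have Cmin : forall R c, Qd n R c -> (C R <= c)%N.
  by move=> R c h; rewrite /C; case: ex_minnP => m _; apply; apply/PbP.
exists C; split.
  move=> R; split; first exact: CP.
  by move=> phi c h1 h2 h3; apply: Cmin; exists phi.
split.
- exists (2 ^ n)%N => R.
  have hK : (2 <= 2 ^ n)%N.
    by rewrite -{1}(expn1 2) leq_exp2l.
  apply: leq_trans (Cmin _ _ (@upper_witness n R hn)) _.
  case: R => [|R].
    by rewrite exp1n; apply: leq_trans (leq_addl _ _); lia.
  apply: leq_trans (leq_addr _ _).
  apply: (@leq_trans ((2 ^ n * R.+1) ^ (n - 1))%N).
    by apply: expn_mono; nia.
  by apply: leq_pmull; rewrite expn_gt0.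
- exists (2 * n)%N => R.
  case: R => [|R].
    apply: leq_trans (leq_addl _ _).
    case: (n - 1)%N => [|e]; first by lia.
    by rewrite exp0n.
  apply: leq_trans (leq_addr _ _).
  set c := C _.
  have [phi [h1 [h2 h3]]] := CP ((2 * n) * R.+1)%N.
  have hd : discriminates_ball (std_basis n) (n * (2 * R.+1)) phi.
    by move=> g hg; apply: h2; move: hg; rewrite mulnCA mulnA.
  have := @pigeon n _ _ phi h1 hd h3; rewrite -/c.
  set m := (2 * R.+1)%N => hp.
  have hm : (m ^ n <= 2 * n * m * c)%N.
    have : (m ^ n < m.+1 ^ n)%N by rewrite ltn_exp2r.
    move: hp; lia.
  have e : n = (n - 1).+1 by lia.
  have hm' : (m ^ (n - 1) <= 2 * n * c)%N.
    move: hm; rewrite {1}e expnS.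
    have -> : (2 * n * m * c = m * (2 * n * c))%N by nia.
    by rewrite leq_pmul2l //; lia.
  apply: leq_trans hm'.
  by apply: expn_mono; lia.
Qed.
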